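(* Let $(L,[\cdot,\cdot],\{\cdot,\cdot,\cdot\},\alpha)$ be a Hom-Lie-Yamaguti algebra over a field $\mathbb{K}$. Then the coboundary operators are well defined, i.e.: (1) if $f\in HomC^1(L,L)$, then $\delta_I^1 f\in HomC^2(L,L)$ and $\delta_{II}^1 f\in HomC^3(L,L)$; (2) if $(f,g)\in HomC^2(L,L)\times HomC^3(L,L)$, then $\delta_I^2(f,g)\in HomC^4(L,L)$ and $\delta_{II}^2 g\in HomC^5(L,L)$; (3) if $(f,g)\in HomC^4(L,L)\times HomC^5(L,L)$, then $\delta_I^3(f,g)\in HomC^6(L,L)$ and $\delta_{II}^3 g\in HomC^7(L,L)$.
   Context: A Hom-Lie-Yamaguti algebra (HLYA) is a quadruple $(L,[\cdot,\cdot],\{\cdot,\cdot,\cdot\},\alpha)$ where $L$ is a vector space over a field $\mathbb{K}$, $[\cdot,\cdot]$ is a bilinear and $\{\cdot,\cdot,\cdot\}$ a trilinear operation on $L$ (written $[xy]$, $\{xyz\}$), and $\alpha:L\to L$ is linear, such that for all $x,y,z,u,v\in L$: $\alpha([xy])=[\alpha(x)\alpha(y)]$; $\alpha(\{xyz\})=\{\alpha(x)\alpha(y)\alpha(z)\}$; $[xx]=0$; $\{xxy\}=0$; $\circlearrowleft_{x,y,z}([[xy]\alpha(z)]+\{xyz\})=0$; $\circlearrowleft_{x,y,z}\{[xy]\alpha(z)\alpha(u)\}=0$; $\{\alpha(x)\alpha(y)[uv]\}=[\{xyu\}\alpha^2(v)]+[\alpha^2(u)\{xyv\}]$; $\{\alpha^2(u)\alpha^2(v)\{xyz\}\}=\{\{uvx\}\alpha^2(y)\alpha^2(z)\}+\{\alpha^2(x)\{uvy\}\alpha^2(z)\}+\{\alpha^2(x)\alpha^2(y)\{uvz\}\}$.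 Here $\circlearrowleft_{x,y,z}$ denotes the sum over cyclic permutations of $x,y,z$. For $n\ge1$, $HomC^n(L,L)$ is the set of $n$-linear maps $f:L^n\to L$ such that $f(x_1,\dots,x_n)=0$ whenever $x_{2i-1}=x_{2i}$ for some $i$ (with $2i\le n$), and $f(\alpha(x_1),\dots,\alpha(x_n))=\alpha(f(x_1,\dots,x_n))$. Coboundary operators: For $f\in HomC^1(L,L)$: $\delta_I^1 f(x,y)=[xf(y)]+[f(x)y]-f([xy])$, $\delta_{II}^1 f(x,y,z)=\{f(x)yz\}+\{xf(y)z\}+\{xyf(z)\}-f(\{xyz\})$. For $f\in HomC^2(L,L)$, $g\in HomC^3(L,L)$: $\delta_I^2(f,g)(x,y,z,u)=\{\alpha(x)\alpha(y)f(z,u)\}-f(\{xyz\},\alpha^2(u))-f(\alpha^2(z),\{xyu\})+g(\alpha(x),\alpha(y),[zu])-[\alpha^2(z)g(x,y,u)]-[g(x,y,z)\alpha^2(u)]$, and $\delta_{II}^2 g(x,y,u,v,w)=\{\alpha^2(x)\alpha^2(y)g(u,v,w)\}-\{g(x,y,u)\alpha^2(v)\alpha^2(w)\}-\{\alpha^2(u)g(x,y,v)\alpha^2(w)\}-\{\alpha^2(u)\alpha^2(v)g(x,y,w)\}+g(\alpha^2(x),\alpha^2(y),\{uvw\})-g(\{xyu\},\alpha^2(v),\alpha^2(w))-g(\alpha^2(u),\{xyv\},\alpha^2(w))-g(\alpha^2(u),\alpha^2(v),\{xyw\})$. For $f\in HomC^4(L,L)$, $g\in HomC^5(L,L)$: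 $\delta_I^3(f,g)(x_1,\dots,x_6)=\{\alpha^3(x_1)\alpha^3(x_2)f(x_3,x_4,x_5,x_6)\}-\{\alpha^3(x_3)\alpha^3(x_4)f(x_1,x_2,x_5,x_6)\}+\sum_{k=1}^2\sum_{i=2k+1}^6(-1)^k f(\alpha^2(x_1),\dots,\widehat{\alpha^2(x_{2k-1})},\widehat{\alpha^2(x_{2k})},\dots,\{x_{2k-1}x_{2k}x_i\},\dots,\alpha^2(x_6))-g(\alpha(x_1),\dots,\alpha(x_4),[x_5x_6])+[\alpha^4(x_5)g(x_1,\dots,x_4,x_6)]+[g(x_1,\dots,x_5)\alpha^4(x_6)]$, $\delta_{II}^3 g(x_1,\dots,x_7)=\sum_{k=1}^3(-1)^{k+1}\{\alpha^4(x_{2k-1})\alpha^4(x_{2k})g(x_1,\dots,\widehat{x_{2k-1}},\widehat{x_{2k}},\dots,x_7)\}+\sum_{k=1}^3\sum_{i=2k+1}^7(-1)^k g(\alpha^2(x_1),\dots,\widehat{\alpha^2(x_{2k-1})},\widehat{\alpha^2(x_{2k})},\dots,\{x_{2k-1}x_{2k}x_i\},\dots,\alpha^2(x_7))+\{g(x_1,\dots,x_5)\alpha^4(x_6)\alpha^4(x_7)\}-\{g(x_1,\dots,x_4,x_6)\alpha^4(x_5)\alpha^4(x_7)\}$. A hat means the entry is omitted; in the double sums the arguments are $\alpha^2(x_j)$ for all $j\notin\{2k-1,2k\}$ in increasing order, except that the entry in position of $x_i$ is replaced by $\{x_{2k-1}x_{2k}x_i\}$. *)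

(* Defs.v *)
From HB Require Import structures.
From mathcomp Require Import all_boot all_order all_algebra.
Set Implicit Arguments. Unset Strict Implicit. Unset Printing Implicit Defensive.
Import GRing.Theory.
Local Open Scope ring_scope.

Section HLY.
Variables (K : fieldType) (L : lmodType K).

(* An n-ary map is a function on argument vectors 'I_n -> L;
   argument x_{k+1} of the paper is x (k : 'I_n) here (0-based). *)

Definition upd n (x : 'I_n -> L) (i : 'I_n) (v : L) : 'I_n -> L :=
  fun j => if j == i then v else x j.

Definition args n (s : seq L) : 'I_n -> L := fun i => nth 0 s i.
Arguments args : clear implicits.
Arguments args n%_N s.

Definition multilinear n (f : ('I_n -> L) -> L) : Prop :=
  forall (x : 'I_n -> L) (i : 'I_n) (a : K) (u v : L),
    f (upd x i (a *: u + v)) = a *: f (upd x i u) + f (upd x i v).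

Definition HomC (alpha : L -> L) n (f : ('I_n -> L) -> L) : Prop :=
  [/\ multilinear f,
      (* f(x_1,..,x_n) = 0 whenever x_{2i-1} = x_{2i} (2i <= n);
         0-based: x_j = x_{j+1} with j even *)
      (forall (x : 'I_n -> L) (i j : 'I_n),
          ~~ odd i -> (j : nat) = i.+1 -> x i = x j -> f x = 0)
    & (forall x : 'I_n -> L, f (fun i => alpha (x i)) = alpha (f x))].

Record HLYA (br : L -> L -> L) (tr : L -> L -> L -> L) (alpha : L -> L) : Prop := {
  alpha_lin : forall (a : K) (x y : L), alpha (a *: x + y) = a *: alpha x + alpha y;
  br_lin1 : forall (a : K) (x y z : L), br (a *: x + y) z = a *: br x z + br y z;
  br_lin2 : forall (a : K) (x y z : L), br z (a *: x + y) = a *: br z x + br z y;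
  tr_lin1 : forall (a : K) (x y z w : L),
      tr (a *: x + y) z w = a *: tr x z w + tr y z w;
  tr_lin2 : forall (a : K) (x y z w : L),
      tr z (a *: x + y) w = a *: tr z x w + tr z y w;
  tr_lin3 : forall (a : K) (x y z w : L),
      tr z w (a *: x + y) = a *: tr z w x + tr z w y;
  alpha_br : forall x y, alpha (br x y) = br (alpha x) (alpha y);
  alpha_tr : forall x y z, alpha (tr x y z) = tr (alpha x) (alpha y) (alpha z);
  br_xx : forall x, br x x = 0;
  tr_xxy : forall x y, tr x x y = 0;
  hly_cyc1 : forall x y z,
      (br (br x y) (alpha z) + tr x y z) + (br (br y z) (alpha x) + tr y z x)
      + (br (br z x) (alpha y) + tr z x y) = 0;
  hly_cyc2 : forall x y z u,
      tr (br x y) (alpha z) (alpha u) + tr (br y z) (alpha x) (alpha u)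
      + tr (br z x) (alpha y) (alpha u) = 0;
  hly_der1 : forall x y u v,
      tr (alpha x) (alpha y) (br u v)
      = br (tr x y u) (alpha (alpha v)) + br (alpha (alpha u)) (tr x y v);
  hly_der2 : forall x y z u v,
      tr (alpha (alpha u)) (alpha (alpha v)) (tr x y z)
      = tr (tr u v x) (alpha (alpha y)) (alpha (alpha z))
        + tr (alpha (alpha x)) (tr u v y) (alpha (alpha z))
        + tr (alpha (alpha x)) (alpha (alpha y)) (tr u v z)
}.

Variables (br : L -> L -> L) (tr : L -> L -> L -> L) (alpha : L -> L).

Local Notation a1 := alpha.
Local Notation a2 := (fun v => alpha (alpha v)).
Local Notation a3 := (fun v => alpha (alpha (alpha v))).
Local Notation a4 := (fun v => alpha (alpha (alpha (alpha v)))).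

Definition deltaI1 (f : ('I_1 -> L) -> L) : ('I_2 -> L) -> L :=
  fun X => let x := X (inord 0) in let y := X (inord 1) in
  br x (f (args 1 [:: y])) + br (f (args 1 [:: x])) y - f (args 1 [:: br x y]).

Definition deltaII1 (f : ('I_1 -> L) -> L) : ('I_3 -> L) -> L :=
  fun X => let x := X (inord 0) in let y := X (inord 1) in let z := X (inord 2) in
  tr (f (args 1 [:: x])) y z + tr x (f (args 1 [:: y])) z
  + tr x y (f (args 1 [:: z])) - f (args 1 [:: tr x y z]).

Definition deltaI2 (f : ('I_2 -> L) -> L) (g : ('I_3 -> L) -> L)
  : ('I_4 -> L) -> L :=
  fun X => let x := X (inord 0) in let y := X (inord 1) in
           let z := X (inord 2) in let u := X (inord 3) in
  tr (a1 x) (a1 y) (f (args 2 [:: z; u]))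
  - f (args 2 [:: tr x y z; a2 u])
  - f (args 2 [:: a2 z; tr x y u])
  + g (args 3 [:: a1 x; a1 y; br z u])
  - br (a2 z) (g (args 3 [:: x; y; u]))
  - br (g (args 3 [:: x; y; z])) (a2 u).

Definition deltaII2 (g : ('I_3 -> L) -> L) : ('I_5 -> L) -> L :=
  fun X => let x := X (inord 0) in let y := X (inord 1) in
           let u := X (inord 2) in let v := X (inord 3) in let w := X (inord 4) in
  tr (a2 x) (a2 y) (g (args 3 [:: u; v; w]))
  - tr (g (args 3 [:: x; y; u])) (a2 v) (a2 w)
  - tr (a2 u) (g (args 3 [:: x; y; v])) (a2 w)
  - tr (a2 u) (a2 v) (g (args 3 [:: x; y; w]))
  + g (args 3 [:: a2 x; a2 y; tr u v w])
  - g (args 3 [:: tr x y u; a2 v; a2 w])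
  - g (args 3 [:: a2 u; tr x y v; a2 w])
  - g (args 3 [:: a2 u; a2 v; tr x y w]).

(* the double sums are written out term by term *)
Definition deltaI3 (f : ('I_4 -> L) -> L) (g : ('I_5 -> L) -> L)
  : ('I_6 -> L) -> L :=
  fun X => let x1 := X (inord 0) in let x2 := X (inord 1) in
           let x3 := X (inord 2) in let x4 := X (inord 3) in
           let x5 := X (inord 4) in let x6 := X (inord 5) in
  tr (a3 x1) (a3 x2) (f (args 4 [:: x3; x4; x5; x6]))
  - tr (a3 x3) (a3 x4) (f (args 4 [:: x1; x2; x5; x6]))
  (* k = 1, i = 3..6, sign -1 *)
  - f (args 4 [:: tr x1 x2 x3; a2 x4; a2 x5; a2 x6])
  - f (args 4 [:: a2 x3; tr x1 x2 x4; a2 x5; a2 x6])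
  - f (args 4 [:: a2 x3; a2 x4; tr x1 x2 x5; a2 x6])
  - f (args 4 [:: a2 x3; a2 x4; a2 x5; tr x1 x2 x6])
  (* k = 2, i = 5..6, sign +1 *)
  + f (args 4 [:: a2 x1; a2 x2; tr x3 x4 x5; a2 x6])
  + f (args 4 [:: a2 x1; a2 x2; a2 x5; tr x3 x4 x6])
  - g (args 5 [:: a1 x1; a1 x2; a1 x3; a1 x4; br x5 x6])
  + br (a4 x5) (g (args 5 [:: x1; x2; x3; x4; x6]))
  + br (g (args 5 [:: x1; x2; x3; x4; x5])) (a4 x6).

Definition deltaII3 (g : ('I_5 -> L) -> L) : ('I_7 -> L) -> L :=
  fun X => let x1 := X (inord 0) in let x2 := X (inord 1) in
           let x3 := X (inord 2) in let x4 := X (inord 3) in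
           let x5 := X (inord 4) in let x6 := X (inord 5) in
           let x7 := X (inord 6) in
  (* first sum, k = 1, 2, 3 with sign (-1)^(k+1) *)
  tr (a4 x1) (a4 x2) (g (args 5 [:: x3; x4; x5; x6; x7]))
  - tr (a4 x3) (a4 x4) (g (args 5 [:: x1; x2; x5; x6; x7]))
  + tr (a4 x5) (a4 x6) (g (args 5 [:: x1; x2; x3; x4; x7]))
  (* double sum, k = 1, i = 3..7, sign -1 *)
  - g (args 5 [:: tr x1 x2 x3; a2 x4; a2 x5; a2 x6; a2 x7])
  - g (args 5 [:: a2 x3; tr x1 x2 x4; a2 x5; a2 x6; a2 x7])
  - g (args 5 [:: a2 x3; a2 x4; tr x1 x2 x5; a2 x6; a2 x7])
  - g (args 5 [:: a2 x3; a2 x4; a2 x5; tr x1 x2 x6; a2 x7])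
  - g (args 5 [:: a2 x3; a2 x4; a2 x5; a2 x6; tr x1 x2 x7])
  (* k = 2, i = 5..7, sign +1 *)
  + g (args 5 [:: a2 x1; a2 x2; tr x3 x4 x5; a2 x6; a2 x7])
  + g (args 5 [:: a2 x1; a2 x2; a2 x5; tr x3 x4 x6; a2 x7])
  + g (args 5 [:: a2 x1; a2 x2; a2 x5; a2 x6; tr x3 x4 x7])
  (* k = 3, i = 7, sign -1 *)
  - g (args 5 [:: a2 x1; a2 x2; a2 x3; a2 x4; tr x5 x6 x7])
  + tr (g (args 5 [:: x1; x2; x3; x4; x5])) (a4 x6) (a4 x7)
  - tr (g (args 5 [:: x1; x2; x3; x4; x6])) (a4 x5) (a4 x7).

End HLY.

(* Main.v *)
Require Import Defs.
From HB Require Import structures.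
From mathcomp Require Import all_boot all_order all_algebra.
From Stdlib Require Import FunctionalExtensionality.
Set Implicit Arguments. Unset Strict Implicit. Unset Printing Implicit Defensive.
Import GRing.Theory.
Local Open Scope ring_scope.


Section Aux.
Variables (K : fieldType) (L : lmodType K).
Implicit Types (h g : L -> L) (s : seq L) (a b u w x y : L).

Definition lin h := forall (a : K) u v, h (a *: u + v) = a *: h u + h v.

Lemma lin_ext h1 h2 : (forall w, h1 w = h2 w) -> lin h2 -> lin h1.
Proof. by move=> E H a u v; rewrite !E. Qed.

Lemma ml_of_lin n (F : ('I_n -> L) -> L) :
  (forall X i, lin (fun w => F (upd X i w))) -> multilinear F.
Proof. by move=> H X i; apply: H. Qed.

Lemma updE n (X : 'I_n.+1 -> L) i w k : (k <= n)%N ->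
  upd X i w (inord k) = if k == val i then w else X (inord k).
Proof. by move=> Hk; rewrite /upd -val_eqE /= inordK. Qed.

Lemma lin0 h : lin h -> h 0 = 0.
Proof.
move=> H; have := H 1 0 0; rewrite !scale1r addr0.
by move/(congr1 (fun x => x - h 0)); rewrite subrr addrK => <-.
Qed.
Lemma linD h x y : lin h -> h (x + y) = h x + h y.
Proof. by move=> H; have := H 1 x y; rewrite !scale1r. Qed.
Lemma linN h x : lin h -> h (- x) = - h x.
Proof. by move=> H; rewrite -[- x]addr0 -scaleN1r H (lin0 H) addr0 scaleN1r. Qed.

Lemma lin_id : lin (fun w => w). Proof. by []. Qed.
Lemma lin_add h1 h2 : lin h1 -> lin h2 -> lin (fun w => h1 w + h2 w).
Proof. by move=> H1 H2 a u v; rewrite H1 H2 scalerDr addrACA. Qed.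
Lemma lin_sub h1 h2 : lin h1 -> lin h2 -> lin (fun w => h1 w - h2 w).
Proof. by move=> H1 H2 a u v; rewrite H1 H2 scalerBr opprD addrACA. Qed.
Lemma lin_comp g h : lin g -> lin h -> lin (fun w => g (h w)).
Proof. by move=> Hg Hh a u v; rewrite Hh Hg. Qed.

Lemma args_upd n (s1 s2 : seq L) a (H : (size s1 < n)%N) :
  args (n:=n) (s1 ++ a :: s2) = upd (args (n:=n) (s1 ++ 0 :: s2)) (Ordinal H) a.
Proof.
apply: functional_extensionality => j.
rewrite /upd /args -val_eqE /= !nth_cat.
case: (ltngtP j (size s1)) => Hj //.
- by case E: (j - size s1)%N => [|k] //; move/eqP: E; rewrite subn_eq0 leqNgt Hj.
- by rewrite Hj subnn.
Qed.

Lemma lin_fpos n (f : ('I_n -> L) -> L) (s1 s2 : seq L) :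
  multilinear f -> (size s1 < n)%N -> lin (fun w => f (args (n:=n) (s1 ++ w :: s2))).
Proof.
move=> Hf H a u v.
rewrite (@args_upd n s1 s2 (a *: u + v) H) (@args_upd n s1 s2 u H) (@args_upd n s1 s2 v H).
exact: Hf.
Qed.

Lemma lin_fpos2 n (f : ('I_n -> L) -> L) (s1 s2 : seq L) u :
  multilinear f -> ((size s1).+1 < n)%N ->
  lin (fun w => f (args (n:=n) (s1 ++ u :: w :: s2))).
Proof.
move=> Hf H a x y; rewrite -!(cat_rcons u s1).
by apply: lin_fpos; rewrite // size_rcons.
Qed.

Variable alpha : L -> L.

Lemma f_alt_pos n (f : ('I_n -> L) -> L) (s1 s2 : seq L) a :
  HomC alpha f -> ~~ odd (size s1) -> ((size s1).+1 < n)%N ->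
  f (args (n:=n) (s1 ++ a :: a :: s2)) = 0.
Proof.
case=> _ Halt _ He H.
apply: (Halt _ (Ordinal (ltnW H)) (Ordinal H)) => //=.
rewrite /args !nth_cat ltnn subnn /= ltnNge leqnSn /=.
by rewrite subSnn.
Qed.

Lemma f_skew_pos n (f : ('I_n -> L) -> L) (s1 s2 : seq L) a b :
  HomC alpha f -> ~~ odd (size s1) -> ((size s1).+1 < n)%N ->
  f (args (n:=n) (s1 ++ a :: b :: s2)) + f (args (n:=n) (s1 ++ b :: a :: s2)) = 0.
Proof.
move=> Hf He H; have Hm : multilinear f by case: Hf.
have H1 : (size s1 < n)%N by apply: ltnW.
have := f_alt_pos (s1:=s1) s2 (a + b) Hf He H.
rewrite (linD _ _ (lin_fpos ((a + b) :: s2) Hm H1)).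
rewrite (linD _ _ (@lin_fpos2 n f s1 s2 a Hm H)) (linD _ _ (@lin_fpos2 n f s1 s2 b Hm H)).
by rewrite !(f_alt_pos (s1:=s1) s2 _ Hf He H) add0r addr0.
Qed.

Lemma f_hom n (f : ('I_n -> L) -> L) s :
  HomC alpha f -> alpha 0 = 0 -> f (args (n:=n) (map alpha s)) = alpha (f (args (n:=n) s)).
Proof.
case=> _ _ Hh a0; rewrite -Hh; congr f; apply: functional_extensionality => j.
rewrite /args; case: (ltnP j (size s)) => Hj; first by rewrite (nth_map 0).
by rewrite !nth_default ?size_map.
Qed.

End Aux.


Section Spec.
Variables (K : fieldType) (L : lmodType K) (alpha : L -> L).
Implicit Types (h : L -> L) (s : seq L) (a b c d e w : L).

Lemma HomC_ml n (f : ('I_n -> L) -> L) : HomC alpha f -> multilinear f.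
Proof. by case. Qed.

Section F.
Variable n : nat.
Lemma fA01 (f : ('I_n.+2 -> L) -> L) a s : HomC alpha f -> f (args (a :: a :: s)) = 0.
Proof. by move=> Hf; apply: (f_alt_pos (s1:=[::]) s a Hf). Qed.
Lemma fA23 (f : ('I_n.+4 -> L) -> L) a b c s : HomC alpha f -> f (args (b :: c :: a :: a :: s)) = 0.
Proof. by move=> Hf; apply: (f_alt_pos (s1:=[:: b; c]) s a Hf). Qed.
Lemma fS01 (f : ('I_n.+2 -> L) -> L) a b s : HomC alpha f ->
  f (args (a :: b :: s)) + f (args (b :: a :: s)) = 0.
Proof. by move=> Hf; apply: (f_skew_pos (s1:=[::]) s a b Hf). Qed.
Lemma fS23 (f : ('I_n.+4 -> L) -> L) a b c d s : HomC alpha f ->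
  f (args (c :: d :: a :: b :: s)) + f (args (c :: d :: b :: a :: s)) = 0.
Proof. by move=> Hf; apply: (f_skew_pos (s1:=[:: c; d]) s a b Hf). Qed.

Lemma f00 (f : ('I_n.+1 -> L) -> L) s : HomC alpha f -> f (args (0 :: s)) = 0.
Proof. by move=> Hf; apply: (lin0 (lin_fpos (s1:=[::]) s (HomC_ml Hf) _)). Qed.
Lemma f01 (f : ('I_n.+2 -> L) -> L) a s : HomC alpha f -> f (args (a :: 0 :: s)) = 0.
Proof. by move=> Hf; apply: (lin0 (lin_fpos (s1:=[:: a]) s (HomC_ml Hf) _)). Qed.
Lemma f02 (f : ('I_n.+3 -> L) -> L) a b s : HomC alpha f -> f (args (a :: b :: 0 :: s)) = 0.
Proof. by move=> Hf; apply: (lin0 (lin_fpos (s1:=[:: a; b]) s (HomC_ml Hf) _)). Qed.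
Lemma f03 (f : ('I_n.+4 -> L) -> L) a b c s : HomC alpha f -> f (args (a :: b :: c :: 0 :: s)) = 0.
Proof. by move=> Hf; apply: (lin0 (lin_fpos (s1:=[:: a; b; c]) s (HomC_ml Hf) _)). Qed.
Lemma f04 (f : ('I_(n.+4).+1 -> L) -> L) a b c d s : HomC alpha f -> f (args (a :: b :: c :: d :: 0 :: s)) = 0.
Proof. by move=> Hf; apply: (lin0 (lin_fpos (s1:=[:: a; b; c; d]) s (HomC_ml Hf) _)). Qed.

Lemma lin_f0 (f : ('I_n.+1 -> L) -> L) s h : HomC alpha f -> lin h ->
  lin (fun w => f (args (h w :: s))).
Proof. by move=> Hf; apply: lin_comp (lin_fpos (s1:=[::]) s (HomC_ml Hf) _). Qed.
Lemma lin_f1 (f : ('I_n.+2 -> L) -> L) a s h : HomC alpha f -> lin h ->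
  lin (fun w => f (args (a :: h w :: s))).
Proof. by move=> Hf; apply: lin_comp (lin_fpos (s1:=[:: a]) s (HomC_ml Hf) _). Qed.
Lemma lin_f2 (f : ('I_n.+3 -> L) -> L) a b s h : HomC alpha f -> lin h ->
  lin (fun w => f (args (a :: b :: h w :: s))).
Proof. by move=> Hf; apply: lin_comp (lin_fpos (s1:=[:: a; b]) s (HomC_ml Hf) _). Qed.
Lemma lin_f3 (f : ('I_n.+4 -> L) -> L) a b c s h : HomC alpha f -> lin h ->
  lin (fun w => f (args (a :: b :: c :: h w :: s))).
Proof. by move=> Hf; apply: lin_comp (lin_fpos (s1:=[:: a; b; c]) s (HomC_ml Hf) _). Qed.
Lemma lin_f4 (f : ('I_(n.+4).+1 -> L) -> L) a b c d s h : HomC alpha f -> lin h ->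
  lin (fun w => f (args (a :: b :: c :: d :: h w :: s))).
Proof. by move=> Hf; apply: lin_comp (lin_fpos (s1:=[:: a; b; c; d]) s (HomC_ml Hf) _). Qed.
End F.

Section H.
Variables (n : nat) (f : ('I_n -> L) -> L) (Hf : HomC alpha f) (a0 : alpha 0 = 0).
Lemma fh1 a : alpha (f (args [:: a])) = f (args [:: alpha a]).
Proof. exact: (esym (f_hom [:: a] Hf a0)). Qed.
Lemma fh2 a b : alpha (f (args [:: a; b])) = f (args [:: alpha a; alpha b]).
Proof. exact: (esym (f_hom [:: a; b] Hf a0)). Qed.
Lemma fh3 a b c : alpha (f (args [:: a; b; c])) = f (args [:: alpha a; alpha b; alpha c]).
Proof. exact: (esym (f_hom [:: a; b; c] Hf a0)). Qed.
Lemma fh4 a b c d : alpha (f (args [:: a; b; c; d])) = f (args [:: alpha a; alpha b; alpha c; alpha d]).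
Proof. exact: (esym (f_hom [:: a; b; c; d] Hf a0)). Qed.
Lemma fh5 a b c d e : alpha (f (args [:: a; b; c; d; e])) =
  f (args [:: alpha a; alpha b; alpha c; alpha d; alpha e]).
Proof. exact: (esym (f_hom [:: a; b; c; d; e] Hf a0)). Qed.
End H.

Lemma cancA (A X Y : L) : X + Y = 0 -> A + X + Y = A.
Proof. by move=> H; rewrite -addrA H addr0. Qed.
Lemma cancS (A X Y : L) : X + Y = 0 -> A - X - Y = A.
Proof. by move=> H; rewrite -addrA -opprD H subr0. Qed.
Lemma cancS0 (X Y : L) : X + Y = 0 -> - X - Y = 0.
Proof. by move=> H; rewrite -opprD H oppr0. Qed.

Section HL.
Variables (br : L -> L -> L) (tr : L -> L -> L -> L) (hL : HLYA br tr alpha).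

Lemma lin_a : lin alpha. Proof. exact: (alpha_lin hL). Qed.
Lemma lin_b1 z : lin (fun x => br x z). Proof. by move=> *; apply: (br_lin1 hL). Qed.
Lemma lin_b2 z : lin (fun x => br z x). Proof. by move=> *; apply: (br_lin2 hL). Qed.
Lemma lin_t1 z y : lin (fun x => tr x z y). Proof. by move=> *; apply: (tr_lin1 hL). Qed.
Lemma lin_t2 z y : lin (fun x => tr z x y). Proof. by move=> *; apply: (tr_lin2 hL). Qed.
Lemma lin_t3 z y : lin (fun x => tr z y x). Proof. by move=> *; apply: (tr_lin3 hL). Qed.

Lemma lin_alpha h : lin h -> lin (fun w => alpha (h w)). Proof. exact: lin_comp lin_a. Qed.
Lemma lin_br1 h c : lin h -> lin (fun w => br (h w) c). Proof. exact: lin_comp (lin_b1 c). Qed.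
Lemma lin_br2 h c : lin h -> lin (fun w => br c (h w)). Proof. exact: lin_comp (lin_b2 c). Qed.
Lemma lin_tr1 h c d : lin h -> lin (fun w => tr (h w) c d). Proof. exact: lin_comp (lin_t1 c d). Qed.
Lemma lin_tr2 h c d : lin h -> lin (fun w => tr c (h w) d). Proof. exact: lin_comp (lin_t2 c d). Qed.
Lemma lin_tr3 h c d : lin h -> lin (fun w => tr c d (h w)). Proof. exact: lin_comp (lin_t3 c d). Qed.

Lemma alpha0 : alpha 0 = 0. Proof. exact: lin0 lin_a. Qed.
Lemma alphaD x y : alpha (x + y) = alpha x + alpha y. Proof. exact: linD lin_a. Qed.
Lemma alphaN x : alpha (- x) = - alpha x. Proof. exact: linN lin_a. Qed.
Lemma br0l x : br 0 x = 0. Proof. exact: lin0 (lin_b1 x). Qed.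
Lemma br0r x : br x 0 = 0. Proof. exact: lin0 (lin_b2 x). Qed.
Lemma tr01 x y : tr 0 x y = 0. Proof. exact: lin0 (lin_t1 x y). Qed.
Lemma tr02 x y : tr x 0 y = 0. Proof. exact: lin0 (lin_t2 x y). Qed.
Lemma tr03 x y : tr x y 0 = 0. Proof. exact: lin0 (lin_t3 x y). Qed.

Lemma brS x y : br x y + br y x = 0.
Proof.
have := br_xx hL (x + y).
rewrite (linD _ _ (lin_b1 _)) !(linD _ _ (lin_b2 _)) !(br_xx hL).
by rewrite add0r addr0.
Qed.
Lemma trS x y z : tr x y z + tr y x z = 0.
Proof.
have := tr_xxy hL (x + y) z.
rewrite (linD _ _ (lin_t1 _ _)) !(linD _ _ (lin_t2 _ _)) !(tr_xxy hL).
by rewrite add0r addr0.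
Qed.
End HL.
End Spec.

Lemma alt_of (K : fieldType) (L : lmodType K) n (F : ('I_n.+1 -> L) -> L) :
  (forall X k, ~~ odd k -> (k < n)%N -> X (inord k) = X (inord k.+1) -> F X = 0) ->
  forall X (i j : 'I_n.+1), ~~ odd i -> (j : nat) = i.+1 -> X i = X j -> F X = 0.
Proof.
move=> H X i j Ho Hj HX; apply: (H X i Ho).
  by rewrite -ltnS -Hj.
by rewrite -Hj !inord_val.
Qed.


Ltac solve_lin hL := repeat first [ apply lin_id | apply lin_sub | apply lin_add
  | apply (lin_alpha hL) | apply (lin_br1 hL) | apply (lin_br2 hL)
  | apply (lin_tr1 hL) | apply (lin_tr2 hL) | apply (lin_tr3 hL)
  | eapply lin_f0 | eapply lin_f1 | eapply lin_f2 | eapply lin_f3 | eapply lin_f4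
  | eassumption ].

Ltac mlin D hL := apply: ml_of_lin => X [[|[|[|[|[|[|[|?]]]]]]] ?]; try by [];
  (eapply lin_ext; [move=> w; unfold D; rewrite !updE /=; [reflexivity | by [] ..] | solve_lin hL]).

Ltac homt D hL Hf Hg a0 := intro; unfold D; simpl; rewrite ?(alphaD hL) ?(alphaN hL);
  repeat rewrite ?(alpha_br hL) ?(alpha_tr hL) ?(fh1 Hf a0) ?(fh2 Hf a0) ?(fh3 Hf a0)
    ?(fh4 Hf a0) ?(fh5 Hf a0) ?(fh1 Hg a0) ?(fh2 Hg a0) ?(fh3 Hg a0) ?(fh4 Hg a0) ?(fh5 Hg a0);
  reflexivity.

Ltac zc hL Hf Hg := repeat progress rewrite ?(br_xx hL) ?(tr_xxy hL) ?(br0l hL) ?(br0r hL)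
  ?(tr01 hL) ?(tr02 hL) ?(tr03 hL) ?(alpha0 hL)
  ?(f00 _ Hf) ?(f01 _ _ Hf) ?(f02 _ _ _ Hf) ?(f03 _ _ _ _ Hf) ?(f04 _ _ _ _ _ Hf)
  ?(f00 _ Hg) ?(f01 _ _ Hg) ?(f02 _ _ _ Hg) ?(f03 _ _ _ _ Hg) ?(f04 _ _ _ _ _ Hg)
  ?(fA01 _ _ Hf) ?(fA23 _ _ _ _ Hf) ?(fA01 _ _ Hg) ?(fA23 _ _ _ _ Hg)
  ?addr0 ?add0r ?subr0 ?sub0r ?oppr0 ?addrK ?subrK
  ?(cancA (brS hL _ _)) ?(cancS (brS hL _ _)) ?(cancS0 (brS hL _ _)) ?(brS hL)
  ?(cancA (trS hL _ _ _)) ?(cancS (trS hL _ _ _)) ?(cancS0 (trS hL _ _ _)) ?(trS hL)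
  ?(cancA (fS01 _ _ _ Hf)) ?(cancS (fS01 _ _ _ Hf)) ?(cancS0 (fS01 _ _ _ Hf)) ?(fS01 _ _ _ Hf)
  ?(cancA (fS01 _ _ _ Hg)) ?(cancS (fS01 _ _ _ Hg)) ?(cancS0 (fS01 _ _ _ Hg)) ?(fS01 _ _ _ Hg)
  ?(cancA (fS23 _ _ _ _ _ Hf)) ?(cancS (fS23 _ _ _ _ _ Hf)) ?(cancS0 (fS23 _ _ _ _ _ Hf)) ?(fS23 _ _ _ _ _ Hf)
  ?(cancA (fS23 _ _ _ _ _ Hg)) ?(cancS (fS23 _ _ _ _ _ Hg)) ?(cancS0 (fS23 _ _ _ _ _ Hg)) ?(fS23 _ _ _ _ _ Hg).

Ltac altt D hL Hf Hg := apply: alt_of => X [|[|[|[|[|[|[|?]]]]]]] //;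
  unfold D; simpl; move=> _ _ <-; zc hL Hf Hg; done.


Theorem mainTheorem1 (K : fieldType) (L : lmodType K)
  (br : L -> L -> L) (tr : L -> L -> L -> L) (alpha : L -> L)
  (hL : HLYA br tr alpha) :
  [/\ (forall f : ('I_1 -> L) -> L,
         HomC alpha f ->
         HomC alpha (deltaI1 br f) /\ HomC alpha (deltaII1 tr f)),
      (forall (f : ('I_2 -> L) -> L) (g : ('I_3 -> L) -> L),
         HomC alpha f -> HomC alpha g ->
         HomC alpha (deltaI2 br tr alpha f g) /\ HomC alpha (deltaII2 tr alpha g))
    & (forall (f : ('I_4 -> L) -> L) (g : ('I_5 -> L) -> L),
         HomC alpha f -> HomC alpha g ->
         HomC alpha (deltaI3 br tr alpha f g) /\ HomC alpha (deltaII3 tr alpha g))].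
Proof.
have a0 := alpha0 hL.
split.
- move=> f Hf; split; split.
  + mlin deltaI1 hL.
  + altt deltaI1 hL Hf Hf.
  + homt deltaI1 hL Hf Hf a0.
  + mlin deltaII1 hL.
  + altt deltaII1 hL Hf Hf.
  + homt deltaII1 hL Hf Hf a0.
- move=> f g Hf Hg; split; split.
  + mlin deltaI2 hL.
  + altt deltaI2 hL Hf Hg.
  + homt deltaI2 hL Hf Hg a0.
  + mlin deltaII2 hL.
  + altt deltaII2 hL Hg Hg.
  + homt deltaII2 hL Hg Hg a0.
- move=> f g Hf Hg; split; split.
  + mlin deltaI3 hL.
  + altt deltaI3 hL Hf Hg.
  + homt deltaI3 hL Hf Hg a0.
  + mlin deltaII3 hL.
  + altt deltaII3 hL Hg Hg.
  + homt deltaII3 hL Hg Hg a0.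
Qed.
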